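(* Let $k\ge2$ and $\varepsilon>0$, and let $a,b,K,s$, the sets $C_x\subseteq[K]$ ($x\in[k]$) and the randomiser $\mathcal{R}:[k]\to[K]$ be the generalised Hadamard Response with parameter $\varepsilon$ as defined in the context. For a distribution $\mathbf{p}$ on $[k]$, let $\Phi_\varepsilon(\mathbf{p})$ denote the distribution of $\mathcal{R}(x)$ for $x\sim\mathbf{p}$, i.e. $\Phi_\varepsilon(\mathbf{p})(y)=\frac{1}{se^\varepsilon+K-s}\big((e^\varepsilon-1)\sum_{x\in[k]}\mathbf{p}(x)\mathbf{1}\{y\in C_x\}+1\big)$. Then for any two distributions $\mathbf{p},\mathbf{q}$ on $[k]$, \[ \|\Phi_\varepsilon(\mathbf{p})-\Phi_\varepsilon(\mathbf{q})\|_2^2\ge\frac{1}{2s}\Big(\frac{e^\varepsilon-1}{e^\varepsilon+\frac Ks-1}\Big)^2\|\mathbf{p}-\mathbf{q}\|_2^2, \] and if $\mathbf{p}=\mathbf{q}$ then $\|\Phi_\varepsilon(\mathbf{p})-\Phi_\varepsilon(\mathbf{q})\|_2=0$.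
   Context: Generalised Hadamard Response with parameter $\varepsilon>0$ on $[k]$: $a=2^{\lfloor\log_2\min(e^{\varepsilon},2k)\rfloor}$, $b=2^{\lceil\log_2(k/a+1)\rceil}$, $K=ab$, $s=b/2$. Let $H_b$ be the $b\times b$ Sylvester Hadamard matrix and $P_b$ the $b\times b$ all-$(-1)$ matrix; $\bar H_{a,b}\in\{-1,1\}^{K\times K}$ is the $a\times a$ block matrix with $H_b$ on the diagonal blocks and $P_b$ in all off-diagonal blocks. The $a(b-1)\ge k$ rows of $\bar H_{a,b}$ that are not the first row of a diagonal copy of $H_b$ each have exactly $s$ entries $+1$; each $x\in[k]$ is mapped to a distinct such row, and $C_x\subseteq[K]$ is the set of columns where that row equals $+1$. The randomiser is $\Pr[\mathcal{R}(x)=y]=\frac{(e^\varepsilon-1)\mathbf{1}\{y\in C_x\}+1}{se^\varepsilon+K-s}$ for $y\in[K]$. *)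

(* Defs.v *)
From mathcomp Require Import all_boot all_order all_algebra.
From mathcomp Require Import all_classical all_reals all_analysis.
Set Implicit Arguments. Unset Strict Implicit. Unset Printing Implicit Defensive.
Import Order.TTheory GRing.Theory Num.Theory.
Local Open Scope ring_scope.

Section GHR.
Variable R : realType.

Definition log2 (x : R) : R := ln x / ln 2.

Definition ghr_ma (eps : R) (k : nat) : nat :=
  `| Num.floor (log2 (Num.min (expR eps) (2 * k%:R)%R)) |%N.
Definition ghr_a (eps : R) (k : nat) : nat := (2 ^ ghr_ma eps k)%N.

Definition ghr_mb (eps : R) (k : nat) : nat :=
  `| Num.ceil (log2 (k%:R / (ghr_a eps k)%:R + 1)%R) |%N.
Definition ghr_b (eps : R) (k : nat) : nat := (2 ^ ghr_mb eps k)%N.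

Definition ghr_K (eps : R) (k : nat) : nat := (ghr_a eps k * ghr_b eps k)%N.
Definition ghr_s (eps : R) (k : nat) : nat := (ghr_b eps k %/ 2)%N.

End GHR.

(* Sylvester Hadamard matrix H_{2^m}, entries indexed by naturals < 2^m,
   via the recursion H_1 = [1], H_{2n} = [[H_n, H_n], [H_n, -H_n]]. *)
Fixpoint sylvester (m i j : nat) : int :=
  match m with
  | 0 => 1
  | m'.+1 =>
      let h := (2 ^ m')%N in
      (if (h <= i)%N && (h <= j)%N then -1 else 1) *
      sylvester m' (i %% h) (j %% h)
  end.

(* \bar H_{a,b}: a x a block matrix (blocks of size b = 2^mb), with H_b on the
   diagonal blocks and the all-(-1) matrix P_b off the diagonal. *)
Definition barH (mb i j : nat) : int :=
  let b := (2 ^ mb)%N in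
  if (i %/ b == j %/ b)%N then sylvester mb (i %% b) (j %% b) else -1.

Section GHR2.
Variable R : realType.
Variables (eps : R) (k : nat).
(* assignment of inputs x in [k] to rows of \bar H_{a,b} *)
Variable row : 'I_k -> 'I_(ghr_K eps k).

Definition ghr_C (x : 'I_k) : {set 'I_(ghr_K eps k)} :=
  [set y : 'I_(ghr_K eps k) | barH (ghr_mb eps k) (row x) y == 1].

Definition ghr_prob (x : 'I_k) (y : 'I_(ghr_K eps k)) : R :=
  ((expR eps - 1) * (y \in ghr_C x)%:R + 1) /
  ((ghr_s eps k)%:R * expR eps + (ghr_K eps k)%:R - (ghr_s eps k)%:R).

Definition ghr_Phi (p : 'I_k -> R) (y : 'I_(ghr_K eps k)) : R :=
  \sum_(x < k) p x * ghr_prob x y.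
End GHR2.

Definition is_distr (R : realType) (n : nat) (p : 'I_n -> R) : Prop :=
  (forall x, 0 <= p x) /\ \sum_(x < n) p x = 1.

Definition sqnorm (R : realType) (n : nat) (v : 'I_n -> R) : R :=
  \sum_(i < n) v i ^+ 2.

(* Main.v *)
Require Import Defs.
From mathcomp Require Import all_boot all_order all_algebra.
From mathcomp Require Import all_classical all_reals all_analysis.
From mathcomp Require Import zify ring lra.
Import Order.TTheory GRing.Theory Num.Theory.
Local Open Scope ring_scope.

Lemma sylv_pm m i j : sylvester m i j = 1 \/ sylvester m i j = -1.
Proof.
elim: m i j => [|m IH] i j /=; first by left.
case: (IH (i %% 2 ^ m)%N (j %% 2 ^ m)%N) => ->;
case: ifP => _; rewrite ?mulr1 ?mul1r ?mulrNN ?mulr1; by [left|right].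
Qed.

Lemma sylv_row0 m j : sylvester m 0 j = 1.
Proof.
elim: m j => [|m IH] j //=.
by rewrite mod0n IH; case: ifP => [/andP[]|]; rewrite ?leqn0 ?expn_eq0 // mulr1.
Qed.

Lemma mod_hi h i : (h <= i)%N -> (i < 2 * h)%N -> (i %% h = i - h)%N.
Proof.
move=> h1 h2; rewrite -{1}(subnK h1) modnDr modn_small //; lia.
Qed.

Lemma sylv_orth (R : realType) m i i' : (i < 2 ^ m)%N -> (i' < 2 ^ m)%N ->
  \sum_(0 <= j < 2 ^ m) ((sylvester m i j)%:~R * (sylvester m i' j)%:~R : R)
  = (i == i')%:R * (2 ^ m)%:R.
Proof.
elim: m i i' => [|m IH] i i'.
  rewrite expn0 => hi hi'; have -> : i = 0%N by lia.
  have -> : i' = 0%N by lia.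
  by rewrite big_nat1 /= mulr1.
set h := (2 ^ m)%N => hi hi'.
have hp : (0 < h)%N by rewrite expn_gt0.
have e2 : (2 ^ m.+1 = h + h)%N by rewrite expnS; lia.
rewrite e2 (big_cat_nat (n := h)) //=; last by lia.
have Sh : forall F : nat -> R, \sum_(h <= j < h + h) F j = \sum_(0 <= j < h) F (j + h).
  by move=> F; rewrite -{1}(add0n h) big_addn addnK.
rewrite Sh.
have E1 : \sum_(0 <= j < h) ((sylvester m.+1 i j)%:~R * (sylvester m.+1 i' j)%:~R : R)
   = \sum_(0 <= j < h) ((sylvester m (i %% h) j)%:~R * (sylvester m (i' %% h) j)%:~R : R).
  rewrite big_nat_cond [RHS]big_nat_cond; apply: eq_bigr => j /andP[/andP[_ hj] _] /=.
  rewrite -/h (modn_small hj).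
  have -> : (h <= j)%N = false by lia.
  by rewrite !andbF !mul1r.
pose si := (if (h <= i)%N then -1 else 1 : R).
pose si' := (if (h <= i')%N then -1 else 1 : R).
have E2 : \sum_(0 <= j < h) ((sylvester m.+1 i (j + h))%:~R * (sylvester m.+1 i' (j + h))%:~R : R)
   = si * si' * \sum_(0 <= j < h) ((sylvester m (i %% h) j)%:~R * (sylvester m (i' %% h) j)%:~R : R).
  rewrite mulr_sumr big_nat_cond [RHS]big_nat_cond; apply: eq_bigr => j /andP[/andP[_ hj] _] /=.
  rewrite -/h modnDr (modn_small hj).
  have -> : (h <= j + h)%N = true by lia.
  rewrite !andbT /si /si'.
  by case: ifP => _; case: ifP => _; rewrite ?intrM ?mulN1r ?mul1r /=; ring.
have hm : forall x, (x < h + h)%N -> (x %% h < h)%N by move=> x _; rewrite ltn_mod.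
rewrite E1 E2 IH ?hm //; last by lia.
rewrite /si /si'.
case: (leqP h i) => h1; case: (leqP h i') => h2.
- rewrite !mod_hi //; try lia.
  have -> : ((i - h == i' - h) = (i == i'))%N by apply/eqP/eqP; lia.
  rewrite natrD; ring.
- have -> : (i == i') = false by apply/negP => /eqP; lia.
  rewrite mul0r; ring.
- have -> : (i == i') = false by apply/negP => /eqP; lia.
  rewrite mul0r; ring.
- rewrite !modn_small //.
  rewrite natrD; ring. all: by rewrite -e2.
Qed.

Lemma sum_blocks (R : realType) a b (F : nat -> R) :
  \sum_(0 <= y < a * b) F y = \sum_(0 <= B < a) \sum_(0 <= j < b) F (B * b + j)%N.
Proof.
elim: a => [|a IH]; first by rewrite mul0n !big_geq.
have Sh : forall c n (G : nat -> R), \sum_(c <= j < c + n) G j = \sum_(0 <= j < n) G (j + c)%N.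
  by move=> c n G; rewrite -{1}(add0n c) big_addn addKn.
have -> : (a.+1 * b = a * b + b)%N by rewrite mulSn addnC.
rewrite big_nat_recr //= -IH (big_cat_nat (n := (a * b)%N)) //=; last by lia.
congr (_ + _); rewrite Sh.
by apply: eq_bigr => j _; rewrite addnC.
Qed.

Lemma barH_blk (R : realType) m B j i : (j < 2 ^ m)%N ->
  ((barH m i (B * 2 ^ m + j) == 1)%:R : R) =
  ((i %/ 2 ^ m)%N == B)%:R * (((sylvester m (i %% 2 ^ m)%N j)%:~R + 1) / 2).
Proof.
move=> hj; have hp : (0 < 2 ^ m)%N by rewrite expn_gt0.
rewrite /barH divnMDl // (divn_small hj) addn0 modnMDl (modn_small hj).
case: ((i %/ 2 ^ m)%N =P B) => _; last by rewrite /= mul0r.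
rewrite mul1r.
by case: (sylv_pm m (i %% 2 ^ m) j) => ->; rewrite /=; field.
Qed.

Lemma ind_pair (R : realType) n m B (g : 'I_n -> nat) : injective g -> forall x x',
  (((g x %/ 2 ^ m)%N == B)%:R * ((g x' %/ 2 ^ m)%N == B)%:R *
     ((g x %% 2 ^ m)%N == (g x' %% 2 ^ m)%N)%:R : R)
  = (x == x')%:R * ((g x %/ 2 ^ m)%N == B)%:R.
Proof.
move=> ginj x x'.
case: (x =P x') => [<-|nx].
  by rewrite eqxx; case: (_ == B)%N; rewrite /= ?mulr1 ?mul1r ?mul0r.
rewrite mul0r.
case: ((g x %/ 2 ^ m)%N =P B) => h1; last by rewrite !mul0r.
case: ((g x' %/ 2 ^ m)%N =P B) => h2; last by rewrite mulr0 mul0r.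
case: eqP => h3; last by rewrite mulr0.
exfalso; apply: nx; apply: ginj.
by rewrite (divn_eq (g x) (2 ^ m)) (divn_eq (g x') (2 ^ m)) h1 h2 h3.
Qed.

Lemma key (R : realType) n a m (g : 'I_n -> nat) (d : 'I_n -> R) :
  injective g -> (forall x, g x < a * 2^m)%N -> (forall x, g x %% 2^m != 0)%N ->
  (2^m)%:R / 4 * \sum_(x < n) d x ^+ 2 <=
  \sum_(0 <= y < a * 2^m) (\sum_(x < n) d x * (barH m (g x) y == 1)%:R) ^+ 2.
Proof.
move=> ginj gbnd gnz.
set b := (2 ^ m)%N.
have bp : (0 < b)%N by rewrite expn_gt0.
rewrite sum_blocks.
pose ind B x : R := ((g x %/ b)%N == B)%:R.
pose H x j : R := (sylvester m (g x %% b) j)%:~R.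
have blk : forall B, \sum_(0 <= j < b) (\sum_(x < n) d x * (barH m (g x) (B*b+j)%N == 1)%:R)^+2
  = b%:R/4 * \sum_(x < n) ind B x * d x ^+2 + b%:R/4 * (\sum_(x < n) d x * ind B x)^+2.
  move=> B.
  pose u j := \sum_(x < n) d x * ind B x * H x j.
  pose t := \sum_(x < n) d x * ind B x.
  have E1 : \sum_(0 <= j < b) (\sum_(x < n) d x * (barH m (g x) (B*b+j)%N == 1)%:R)^+2
      = \sum_(0 <= j < b) (u j ^+ 2 / 4 + t / 2 * u j + t ^+ 2 / 4).
    rewrite big_nat_cond [RHS]big_nat_cond; apply: eq_bigr => j /andP[/andP[_ hj] _].
    have -> : \sum_(x < n) d x * (barH m (g x) (B*b+j)%N == 1)%:R = (u j + t) / 2.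
      rewrite /u /t mulrDl !mulr_suml -big_split /=; apply: eq_bigr => x _.
      by rewrite (barH_blk R m B j (g x) hj) /ind /H; field.
    by field.
  have Eu : \sum_(0 <= j < b) u j = 0.
    rewrite /u exchange_big /=; apply: big1 => z _.
    rewrite -mulr_sumr.
    have -> : \sum_(0 <= j < b) H z j = 0.
      rewrite /H; transitivity (\sum_(0 <= j < b) ((sylvester m 0 j)%:~R * (sylvester m (g z %% b) j)%:~R : R)).
        by apply: eq_bigr => j0 _; rewrite sylv_row0 mul1r.
      rewrite sylv_orth ?expn_gt0 ?ltn_mod //.
      by rewrite eq_sym (negbTE (gnz z)) mul0r.
    by rewrite mulr0.
  have Eu2 : \sum_(0 <= j < b) u j ^+ 2 = b%:R * \sum_(x < n) ind B x * d x ^+ 2.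
    transitivity (\sum_(0 <= j < b) \sum_(x < n) \sum_(x' < n)
        (d x * ind B x * H x j) * (d x' * ind B x' * H x' j)).
      apply: eq_bigr => j0 _; rewrite expr2 /u mulr_suml; apply: eq_bigr => z _.
      by rewrite mulr_sumr.
    rewrite exchange_big /= mulr_sumr; apply: eq_bigr => z _.
    rewrite exchange_big /=.
    transitivity (\sum_(x' < n) d z * d x' * (ind B z * ind B x' *
        (((g z %% b)%N == (g x' %% b)%N)%:R * b%:R))).
      apply: eq_bigr => z' _; rewrite /H -sylv_orth ?expn_gt0 ?ltn_mod //.
      rewrite !mulr_sumr; apply: eq_bigr => j0 _; ring.
    transitivity (\sum_(x' < n) d z * d x' * (((z == x')%:R * ind B z) * b%:R)).
      apply: eq_bigr => z' _; rewrite -(ind_pair R n m B g ginj z z') /ind /b; ring.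
    rewrite (bigD1 z) //= big1 => [|z' /negbTE hz]; last by rewrite eq_sym hz !mul0r mulr0.
    rewrite eqxx addr0 /= mul1r; ring.
rewrite E1 !big_split /= -!mulr_suml -!mulr_sumr Eu Eu2.
  rewrite sumr_const_nat subn0 -mulr_natl /t; ring.
rewrite (eq_bigr _ (fun B _ => blk B)).
have one : forall x, \sum_(0 <= B < a) ind B x = 1.
  move=> x; rewrite /ind.
  transitivity (\sum_(0 <= B < a | B == (g x %/ b)%N) (1 : R)).
    by rewrite [RHS]big_mkcond /=; apply: eq_bigr => B0 _; rewrite eq_sym; case: eqP.
  rewrite big_nat1_eq /=.
  suff -> : ((g x %/ b) < a)%N by [].
  by rewrite ltn_divLR // gbnd.
apply: (le_trans (y := \sum_(0 <= B < a) b%:R / 4 * \sum_(x < n) ind B x * d x ^+ 2)).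
  rewrite -mulr_sumr exchange_big /=.
  rewrite le_eqVlt; apply/orP; left; apply/eqP; congr (_ * _); apply: eq_bigr => x _.
  by rewrite -mulr_suml one mul1r.
apply: ler_sum => B _.
rewrite lerDl; apply: mulr_ge0; first by apply: divr_ge0.
exact: sqr_ge0.
Qed.
Lemma coef_id (R : realType) (s K e : R) : 0 < s -> 0 < s * e + K - s ->
  1 / (2 * s) * ((e - 1) / (e + K / s - 1)) ^+ 2 =
  ((e - 1) / (s * e + K - s)) ^+ 2 * ((2 * s) / 4).
Proof.
move=> sp Dp.
have -> : e + K / s - 1 = (s * e + K - s) / s by field; rewrite gt_eqF.
field; rewrite !gt_eqF //.
Qed.

Theorem lemma4p4 (R : realType) (k : nat) (eps : R)
    (hk : (2 <= k)%N) (heps : 0 < eps)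
    (row : 'I_k -> 'I_(ghr_K eps k))
    (hinj : injective row)
    (hrow : forall x : 'I_k, (val (row x) %% ghr_b eps k != 0)%N) :
  (forall p q : 'I_k -> R, is_distr p -> is_distr q ->
     sqnorm (fun y => ghr_Phi row p y - ghr_Phi row q y) >=
     1 / (2 * (ghr_s eps k)%:R) *
     ((expR eps - 1) /
      (expR eps + (ghr_K eps k)%:R / (ghr_s eps k)%:R - 1)) ^+ 2 *
     sqnorm (fun x => p x - q x)) /\
  (forall p q : 'I_k -> R, is_distr p -> is_distr q -> p = q ->
     Num.sqrt (sqnorm (fun y => ghr_Phi row p y - ghr_Phi row q y)) = 0).
Proof.
split; last first.
  move=> p q _ _ ->; rewrite /sqnorm big1 ?sqrtr0 // => y _.
  by rewrite subrr expr0n.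
move=> p q [p0 p1] [q0 q1].
have sq0 : forall n (v : 'I_n -> R), 0 <= sqnorm v.
  by move=> n v; apply: sumr_ge0 => i _; apply: sqr_ge0.
case: (ghr_s eps k =P 0)%N => [s0 | s0].
  by rewrite s0 mulr0 div1r invr0 !mul0r sq0.
have [mb' hmb] : exists mb', ghr_mb eps k = mb'.+1.
  case E: (ghr_mb eps k) => [|mb']; last by exists mb'.
  by exfalso; apply: s0; rewrite /ghr_s /ghr_b E.
have hs : ghr_s eps k = (2 ^ mb')%N.
  by rewrite /ghr_s /ghr_b hmb expnS mulKn.
have hK : ghr_K eps k = (ghr_a eps k * 2 ^ ghr_mb eps k)%N by [].
set s := ghr_s eps k in s0 hs *.
set K := ghr_K eps k in row hinj hrow hK *.
set e := expR eps.
have e1 : 1 < e by rewrite /e expR_gt1.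
have sp : 0 < s%:R :> R by rewrite ltr0n lt0n; apply/eqP.
have Kp : 0 <= K%:R :> R by [].
pose D := s%:R * e + K%:R - s%:R.
have Dp : 0 < D.
  rewrite /D; have : 0 < s%:R * (e - 1) by rewrite mulr_gt0 // subr_gt0.
  lra.
pose c := (e - 1) / D.
pose del x := p x - q x.
have dsum : \sum_(x < k) del x = 0 by rewrite /del sumrB p1 q1 subrr.
pose F (y : nat) := \sum_(x < k) del x * (barH (ghr_mb eps k) (row x) y == 1)%:R.
have Ediff : forall y, ghr_Phi row p y - ghr_Phi row q y = c * F y.
  move=> y; rewrite /ghr_Phi -sumrB.
  transitivity (\sum_(x < k) (c * (del x * (barH (ghr_mb eps k) (row x) y == 1)%:R) + del x / D)).
    apply: eq_bigr => x _; rewrite /ghr_prob /ghr_C inE -/e -/s -/K -/D /c /del.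
    field; lra.
  by rewrite big_split /= -mulr_sumr -mulr_suml dsum mul0r addr0.
have Esq : sqnorm (fun y => ghr_Phi row p y - ghr_Phi row q y)
    = c ^+ 2 * \sum_(0 <= y < K) F y ^+ 2.
  rewrite /sqnorm (eq_bigr _ (fun y _ => congr1 (fun z => z ^+ 2) (Ediff y))).
  by rewrite big_mkord mulr_sumr; apply: eq_bigr => y _; rewrite exprMn.
rewrite Esq.
have gi : injective (fun x => val (row x)) by move=> x y /val_inj /hinj.
have kk := key R k (ghr_a eps k) (ghr_mb eps k) (fun x => val (row x)) del gi
  (fun x => ltn_ord (row x)) hrow.
rewrite -hK in kk.
have Ecoef : 1 / (2 * s%:R) * ((e - 1) / (e + K%:R / s%:R - 1)) ^+ 2
    = c ^+ 2 * ((2 ^ ghr_mb eps k)%:R / 4).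
  rewrite (coef_id R s%:R K%:R e sp Dp) hmb expnS -hs natrM.
  by [].
rewrite Ecoef -mulrA; apply: ler_wpM2l; first exact: sqr_ge0.
exact: kk.
Qed.
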